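(* Let $\eta\colon\mathcal F\to\mathcal G$ be an exact functor between exact categories satisfying ($*'$), (i$'$) and (ii$'$). Then for any $X\in\mathcal F$ and any admissible epimorphism $T\to\eta(X)$ in $\mathcal G$ there exist an admissible epimorphism $Z\to X$ in $\mathcal F$ and an admissible epimorphism $\eta(Z)\to T$ in $\mathcal G$ such that the composition $\eta(Z)\to T\to\eta(X)$ equals $\eta(Z\to X)$. Moreover, if $\eta$ reflects admissible epimorphisms and satisfies ($*'$) and (ii$'$), then $\eta$ satisfies (i$'$).
   Context: Exact categories in Quillen's sense. Conditions for an exact functor $\eta\colon\mathcal F\to\mathcal G$: (i$'$) for any $X\in\mathcal F$ and any admissible epimorphism $T\to\eta(X)$ there exist an admissible epimorphism $Z\to X$ in $\mathcal F$ and a morphism $\eta(Z)\to T$ in $\mathcal G$ such that $\eta(Z)\to T\to\eta(X)$ equals $\eta(Z\to X)$; (ii$'$) for any $X,Y\in\mathcal F$ and any morphism $g\colon\eta(X)\to\eta(Y)$ there exist an admissible epimorphism $p\colon X'\to X$ and a morphism $h\colon X'\to Y$ in $\mathcal F$ with $g\circ\eta(p)=\eta(h)$; ($*'$) for any $T\in\mathcal G$ there exist $U\in\mathcal F$ and an admissible epimorphism $\eta(U)\to T$. *)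

(* Defs.v *)
From HB Require Import structures.
From mathcomp Require Import all_boot all_algebra.
Set Implicit Arguments. Unset Strict Implicit. Unset Printing Implicit Defensive.
Import GRing.Theory.
Local Open Scope ring_scope.

Record PreAdditive := {
  Obj :> Type;
  Hom : Obj -> Obj -> zmodType;
  idm : forall A : Obj, Hom A A;
  compose : forall A B C : Obj, Hom B C -> Hom A B -> Hom A C;
  comp_assoc : forall A B C D (h : Hom C D) (g : Hom B C) (f : Hom A B),
      compose h (compose g f) = compose (compose h g) f;
  comp_id_l : forall A B (f : Hom A B), compose (idm B) f = f;
  comp_id_r : forall A B (f : Hom A B), compose f (idm A) = f;
  comp_addl : forall A B C (g1 g2 : Hom B C) (f : Hom A B),
      compose (g1 + g2) f = compose g1 f + compose g2 f;
  comp_addr : forall A B C (g : Hom B C) (f1 f2 : Hom A B),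
      compose g (f1 + f2) = compose g f1 + compose g f2
}.
Arguments Hom {p}.
Arguments idm {p}.
Arguments compose {p A B C}.

Section Notions.
Variable C : PreAdditive.

Definition is_zero_object (Z : C) : Prop :=
  (forall A (f g : Hom A Z), f = g) /\ (forall A (f g : Hom Z A), f = g).

Definition is_biproduct (A B S : C) (i1 : Hom A S) (i2 : Hom B S)
  (p1 : Hom S A) (p2 : Hom S B) : Prop :=
  [/\ compose p1 i1 = idm A, compose p2 i2 = idm B, compose p1 i2 = 0, compose p2 i1 = 0
    & compose i1 p1 + compose i2 p2 = idm S].

Definition is_additive : Prop :=
  (exists Z : C, is_zero_object Z) /\
  (forall A B : C, exists (S : C) (i1 : Hom A S) (i2 : Hom B S)
     (p1 : Hom S A) (p2 : Hom S B), is_biproduct i1 i2 p1 p2).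

Definition is_kernel (A B D : C) (i : Hom A B) (p : Hom B D) : Prop :=
  compose p i = 0 /\
  forall E (f : Hom E B), compose p f = 0 ->
    exists g : Hom E A, compose i g = f /\ forall g' : Hom E A, compose i g' = f -> g' = g.

Definition is_cokernel (A B D : C) (i : Hom A B) (p : Hom B D) : Prop :=
  compose p i = 0 /\
  forall E (f : Hom B E), compose f i = 0 ->
    exists g : Hom D E, compose g p = f /\ forall g' : Hom D E, compose g' p = f -> g' = g.

Definition is_iso (A B : C) (f : Hom A B) : Prop :=
  exists g : Hom B A, compose g f = idm A /\ compose f g = idm B.

Definition is_pushout (A B A' B' : C) (i : Hom A B) (f : Hom A A')
  (f' : Hom B B') (i' : Hom A' B') : Prop :=
  compose f' i = compose i' f /\
  forall D (g : Hom B D) (h : Hom A' D), compose g i = compose h f ->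
    exists u : Hom B' D, (compose u f' = g /\ compose u i' = h) /\
      forall u' : Hom B' D, compose u' f' = g -> compose u' i' = h -> u' = u.

Definition is_pullback (B D B' D' : C) (p : Hom B D) (f : Hom D' D)
  (f' : Hom B' B) (p' : Hom B' D') : Prop :=
  compose p f' = compose f p' /\
  forall E (g : Hom E B) (h : Hom E D'), compose p g = compose f h ->
    exists u : Hom E B', (compose f' u = g /\ compose p' u = h) /\
      forall u' : Hom E B', compose f' u' = g -> compose p' u' = h -> u' = u.

End Notions.

(** An exact structure on an additive category (Quillen; axioms as in
    Keller / Buehler, "Exact categories", Def. 2.1). *)
Definition conflation_class (C : PreAdditive) :=
  forall A B D : C, Hom A B -> Hom B D -> Prop.

Section ExactAxioms.
Variables (C : PreAdditive) (E : conflation_class C).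

Definition adm_mono (A B : C) (i : Hom A B) : Prop :=
  exists (D : C) (p : Hom B D), E i p.
Definition adm_epi (B D : C) (p : Hom B D) : Prop :=
  exists (A : C) (i : Hom A B), E i p.

Definition exact_structure_axioms : Prop :=
  [/\
      (forall A B D (i : Hom A B) (p : Hom B D), E i p ->
         is_kernel i p /\ is_cokernel i p),
      (forall A B D A' B' D' (i : Hom A B) (p : Hom B D)
              (i' : Hom A' B') (p' : Hom B' D')
              (a : Hom A A') (b : Hom B B') (d : Hom D D'),
         E i p -> is_iso a -> is_iso b -> is_iso d ->
         compose b i = compose i' a -> compose d p = compose p' b -> E i' p'),
      (forall A : C, adm_mono (idm A)) /\ (forall A : C, adm_epi (idm A)),
      (forall A B D (i : Hom A B) (j : Hom B D),
         adm_mono i -> adm_mono j -> adm_mono (compose j i)) /\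
      (forall A B D (p : Hom A B) (q : Hom B D),
         adm_epi p -> adm_epi q -> adm_epi (compose q p))
    &
      (forall A B A' (i : Hom A B) (f : Hom A A'), adm_mono i ->
         exists (B' : C) (f' : Hom B B') (i' : Hom A' B'),
           is_pushout i f f' i' /\ adm_mono i') /\
      (forall B D D' (p : Hom B D) (f : Hom D' D), adm_epi p ->
         exists (B' : C) (f' : Hom B' B) (p' : Hom B' D'),
           is_pullback p f f' p' /\ adm_epi p')].

End ExactAxioms.

Record ExactCategory := {
  ecat :> PreAdditive;
  ecat_additive : is_additive ecat;
  conflation : conflation_class ecat;
  ecat_exact : exact_structure_axioms conflation
}.

Definition eadm_epi (C : ExactCategory) (B D : C) (p : Hom B D) : Prop :=
  adm_epi (@conflation C) p.

Record ExactFunctor (F G : ExactCategory) := {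
  fobj :> F -> G;
  fmap : forall A B : F, Hom A B -> Hom (fobj A) (fobj B);
  fmap_id : forall A : F, fmap (idm A) = idm (fobj A);
  fmap_comp : forall A B D (g : Hom B D) (f : Hom A B),
      fmap (compose g f) = compose (fmap g) (fmap f);
  fmap_add : forall A B (f g : Hom A B), fmap (f + g) = fmap f + fmap g;
  fmap_conflation : forall A B D (i : Hom A B) (p : Hom B D),
      @conflation F _ _ _ i p -> @conflation G _ _ _ (fmap i) (fmap p)
}.
Arguments fmap {F G} e {A B}.

Section Conditions.
Variables (F G : ExactCategory) (eta : ExactFunctor F G).

Definition cond_i : Prop :=
  forall (X : F) (T : G) (g : Hom T (eta X)), eadm_epi g ->
    exists (Z : F) (p : Hom Z X) (f : Hom (eta Z) T),
      eadm_epi p /\ compose g f = fmap eta p.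

Definition cond_ii : Prop :=
  forall (X Y : F) (g : Hom (eta X) (eta Y)),
    exists (X' : F) (p : Hom X' X) (h : Hom X' Y),
      eadm_epi p /\ compose g (fmap eta p) = fmap eta h.

Definition cond_star : Prop :=
  forall T : G, exists (U : F) (q : Hom (eta U) T), eadm_epi q.

Definition reflects_adm_epi : Prop :=
  forall (X Y : F) (p : Hom X Y), eadm_epi (fmap eta p) -> eadm_epi p.

End Conditions.

(* Main.v *)
Require Import Defs.
From mathcomp Require Import all_boot.
From mathcomp Require Import ssralg.
Set Implicit Arguments. Unset Strict Implicit.
Import GRing.Theory.
Local Open Scope ring_scope.

Lemma comp0l (C : PreAdditive) (A B D : C) (f : Hom A B) :
  compose (0 : Hom B D) f = 0.
Proof.
apply: (@addrI _ (compose (0 : Hom B D) f)).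
by rewrite -comp_addl !addr0.
Qed.

Lemma comp0r (C : PreAdditive) (A B D : C) (g : Hom B D) :
  compose g (0 : Hom A B) = 0.
Proof.
apply: (@addrI _ (compose g (0 : Hom A B))).
by rewrite -comp_addr !addr0.
Qed.

Lemma compNl (C : PreAdditive) (A B D : C) (g : Hom B D) (f : Hom A B) :
  compose (- g) f = - compose g f.
Proof.
apply: (@addrI _ (compose g f)).
by rewrite -comp_addl !subrr comp0l.
Qed.

Lemma compNr (C : PreAdditive) (A B D : C) (g : Hom B D) (f : Hom A B) :
  compose g (- f) = - compose g f.
Proof.
apply: (@addrI _ (compose g f)).
by rewrite -comp_addr !subrr comp0r.
Qed.

Lemma iso_epi (C : ExactCategory) (B D S : C) (p : Hom B D) (u : Hom S B)
  (v : Hom B S) :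
  eadm_epi p -> compose v u = idm S -> compose u v = idm B ->
  eadm_epi (compose p u).
Proof.
case: (ecat_exact C) => _ Hiso _ _ _.
move=> [A [i Hip]] Hvu Huv.
exists A, (compose v i).
apply: (Hiso _ _ _ _ _ _ i p _ _ (idm A) v (idm D) Hip).
- by exists (idm A); rewrite comp_id_l.
- by exists u.
- by exists (idm D); rewrite comp_id_l.
- by rewrite comp_id_r.
- by rewrite comp_id_l -comp_assoc Huv comp_id_r.
Qed.

Lemma pb_epi (C : ExactCategory) (B D B' D' : C) (p : Hom B D) (f : Hom D' D)
  (f' : Hom B' B) (p' : Hom B' D') (S : C) (g : Hom S B) (h : Hom S D')
  (v : Hom B' S) :
  is_pullback p f f' p' -> eadm_epi p' -> compose p g = compose f h ->
  compose g v = f' -> compose h v = p' ->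
  (forall w : Hom S S, compose g w = g -> compose h w = h -> w = idm S) ->
  eadm_epi h.
Proof.
move=> [Hc Hu] He Hgh Hgv Hhv Hjm.
have [u [[Hfu Hpu] Hun]] := Hu S g h Hgh.
have [u0 [_ Hu0]] := Hu B' f' p' Hc.
have Huv : compose u v = idm B'.
  rewrite (Hu0 (idm B')) ?comp_id_r //.
  apply: Hu0; by rewrite comp_assoc ?Hfu ?Hpu.
have Hvu : compose v u = idm S.
  apply: Hjm; by rewrite comp_assoc ?Hgv ?Hhv.
rewrite -Hpu.
exact: (iso_epi He Hvu Huv).
Qed.

Lemma bp_eqs (C : PreAdditive) (A B S : C) (i1 : Hom A S) (i2 : Hom B S)
  (p1 : Hom S A) (p2 : Hom S B) : is_biproduct i1 i2 p1 p2 ->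
  [/\ forall X (x : Hom X A), compose p1 (compose i1 x) = x,
      forall X (x : Hom X B), compose p2 (compose i2 x) = x,
      forall X (x : Hom X B), compose p1 (compose i2 x) = 0,
      forall X (x : Hom X A), compose p2 (compose i1 x) = 0 &
      forall X (x : Hom X S), compose i1 (compose p1 x) + compose i2 (compose p2 x) = x].
Proof.
case=> H1 H2 H3 H4 H5; split=> X x.
- by rewrite comp_assoc H1 comp_id_l.
- by rewrite comp_assoc H2 comp_id_l.
- by rewrite comp_assoc H3 comp0l.
- by rewrite comp_assoc H4 comp0l.
- by rewrite !comp_assoc -comp_addl H5 comp_id_l.
Qed.

Lemma lemA (C : ExactCategory) (A B S : C) (i1 : Hom A S) (i2 : Hom B S)
  (p1 : Hom S A) (p2 : Hom S B) : is_biproduct i1 i2 p1 p2 -> eadm_epi p2.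
Proof.
move=> bp.
case: (ecat_exact C) => Hker _ [Hm0 _] _ [_ Hpb].
have [D [c Hc]] := Hm0 A.
have [_ [Hc0 Hcu]] := Hker _ _ _ _ _ Hc.
rewrite comp_id_r in Hc0.
have Hout : forall Y (k : Hom D Y), k = 0.
  move=> Y k.
  have [g0 [_ Hg0]] := Hcu Y 0 (comp0l _ _).
  have -> : k = g0 by apply: Hg0; rewrite Hc0 comp0r.
  by symmetry; apply: Hg0; rewrite comp0l.
have Hin : forall Y (k : Hom Y D), k = 0.
  by move=> Y k; rewrite -(comp_id_l k) (Hout _ (idm D)) comp0l.
have Hce : eadm_epi c by exists A, (idm A).
have [B' [f' [p' [Hpbk He']]]] := Hpb _ _ _ c (0 : Hom B D) Hce.
case: (bp_eqs bp) => E1 E2 E3 E4 E5.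
case: bp => K1 K2 K3 K4 K5.
apply: (pb_epi (g := p1) (v := compose i1 f' + compose i2 p') Hpbk He').
- by rewrite (Hin _ (compose c p1)) (Hin _ (compose 0 p2)).
- by rewrite comp_addr E1 E3 addr0.
- by rewrite comp_addr E4 E2 add0r.
- move=> w H1 H2.
  by rewrite -(comp_id_l w) -K5 comp_addl -!comp_assoc H1 H2.
Qed.

Lemma lemC (C : ExactCategory) (A T S : C) (j1 : Hom A S) (j2 : Hom T S)
  (q1 : Hom S A) (q2 : Hom S T) (f0 : Hom A T) :
  is_biproduct j1 j2 q1 q2 -> eadm_epi (compose f0 q1 + q2).
Proof.
move=> bp.
case: (bp) => K1 K2 K3 K4 K5.
case: (bp_eqs bp) => E1 E2 E3 E4 E5.
apply: (@lemA C A T S (j1 - compose j2 f0) j2 q1).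
split.
- by rewrite comp_addr compNr K1 E3 subr0.
- by rewrite comp_addl -!comp_assoc K2 K3 comp0r add0r.
- exact: K3.
- rewrite comp_addl !comp_addr !compNr -!comp_assoc K1 K4 E3 E2 comp0r comp_id_r.
  rewrite subr0 add0r; exact: subrr.
- rewrite comp_addl comp_addr compNl -!comp_assoc addrA subrK; exact: K5.

Qed.

Lemma lemD (C : ExactCategory) (A B S T S' : C) (i1 : Hom A S) (i2 : Hom B S)
  (p1 : Hom S A) (p2 : Hom S B) (j1 : Hom A S') (j2 : Hom T S')
  (q1 : Hom S' A) (q2 : Hom S' T) (e : Hom B T) :
  is_biproduct i1 i2 p1 p2 -> is_biproduct j1 j2 q1 q2 -> eadm_epi e ->
  eadm_epi (compose j1 p1 + compose j2 (compose e p2)).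
Proof.
move=> bp bq He.
case: (ecat_exact C) => _ _ _ _ [_ Hpb].
have [B' [f' [p' [Hpbk He']]]] := Hpb _ _ _ e q2 He.
case: (bp_eqs bp) => E1 E2 E3 E4 E5.
case: (bp_eqs bq) => F1 F2 F3 F4 F5.
have Hcomm := proj1 Hpbk.
apply: (pb_epi (g := p2) (v := compose i1 (compose q1 p') + compose i2 f') Hpbk He').
- by rewrite comp_addr F4 F2 add0r.
- by rewrite comp_addr E4 E2 add0r.
- rewrite comp_addl !comp_addr -!comp_assoc E1 E3 E4 E2 ?comp0r addr0 add0r.
  by rewrite Hcomm F5.
- move=> w H1 H2.
  have H3 : compose p1 w = p1.
    have := congr1 (compose q1) H2.
    by rewrite !comp_addl !comp_addr -!comp_assoc F1 F3 ?comp0r !addr0 => ->; rewrite F1 F3 addr0.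
  rewrite -(comp_id_l w); case: bp => _ _ _ _ <-.
  by rewrite comp_addl -!comp_assoc H1 H3.
Qed.

Lemma bp_swap (C : PreAdditive) (A B S : C) (i1 : Hom A S) (i2 : Hom B S)
  (p1 : Hom S A) (p2 : Hom S B) :
  is_biproduct i1 i2 p1 p2 -> is_biproduct i2 i1 p2 p1.
Proof. by case=> H1 H2 H3 H4 H5; split => //; rewrite addrC. Qed.

Lemma sumepi (C : ExactCategory) (A B S T : C) (i1 : Hom A S) (i2 : Hom B S)
  (p1 : Hom S A) (p2 : Hom S B) (f0 : Hom A T) (e : Hom B T) :
  is_biproduct i1 i2 p1 p2 -> eadm_epi e ->
  eadm_epi (compose f0 p1 + compose e p2).
Proof.
move=> bp He.
case: (ecat_exact C) => _ _ _ [_ He1] _.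
have [S' [j1 [j2 [q1 [q2 bq]]]]] := (ecat_additive C).2 A T.
have H1 := lemC f0 bq.
have H2 := lemD bp bq He.
have := He1 _ _ _ _ _ H2 H1.
case: (bp_eqs bq) => F1 F2 F3 F4 F5.
by rewrite comp_addl !comp_addr -!comp_assoc F1 F3 F4 F2 ?comp0r addr0 add0r.
Qed.

Lemma fmap0 (F G : ExactCategory) (eta : ExactFunctor F G) (A B : F) :
  fmap eta (0 : Hom A B) = 0.
Proof.
apply: (@addrI _ (fmap eta (0 : Hom A B))).
by rewrite -fmap_add !addr0.
Qed.

Lemma fmap_epi (F G : ExactCategory) (eta : ExactFunctor F G) (A B : F)
  (p : Hom A B) : eadm_epi p -> eadm_epi (fmap eta p).
Proof.
move=> [K [i Hi]]; exists (eta K), (fmap eta i).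
exact: fmap_conflation.
Qed.

Lemma fmap_bp (F G : ExactCategory) (eta : ExactFunctor F G) (A B S : F)
  (i1 : Hom A S) (i2 : Hom B S) (p1 : Hom S A) (p2 : Hom S B) :
  is_biproduct i1 i2 p1 p2 ->
  is_biproduct (fmap eta i1) (fmap eta i2) (fmap eta p1) (fmap eta p2).
Proof.
case=> H1 H2 H3 H4 H5; split.
- by rewrite -fmap_comp H1 fmap_id.
- by rewrite -fmap_comp H2 fmap_id.
- by rewrite -fmap_comp H3 fmap0.
- by rewrite -fmap_comp H4 fmap0.
- by rewrite -!fmap_comp -fmap_add H5 fmap_id.
Qed.

Theorem lemma0p1 (F G : ExactCategory) (eta : ExactFunctor F G) :
  (cond_star eta -> cond_i eta -> cond_ii eta ->
    forall (X : F) (T : G) (g : Hom T (eta X)), eadm_epi g ->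
      exists (Z : F) (p : Hom Z X) (f : Hom (eta Z) T),
        [/\ eadm_epi p, eadm_epi f & compose g f = fmap eta p])
  /\
  (reflects_adm_epi eta -> cond_star eta -> cond_ii eta -> cond_i eta).
Proof.
case: (ecat_exact G) => _ _ _ [_ He1] _.
split.
- move=> star ci cii X T g Hg.
  have [U [q Hq]] := star T.
  have [Z0 [p0 [f0 [Hp0 Hgf0]]]] := ci X T g Hg.
  have [U' [p' [h [Hp' Hh]]]] := cii U X (compose g q).
  have [S [i1 [i2 [pi1 [pi2 bp]]]]] := (ecat_additive F).2 Z0 U'.
  exists S, (compose h pi2 + compose p0 pi1),
    (compose f0 (fmap eta pi1) + compose (compose q (fmap eta p')) (fmap eta pi2)).
  split.
  + exact: (sumepi h (bp_swap bp) Hp0).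
  + apply: (sumepi f0 (fmap_bp eta bp)).
    exact: (He1 _ _ _ _ _ (fmap_epi eta Hp') Hq).
  + rewrite fmap_add !fmap_comp comp_addr !comp_assoc Hgf0 Hh.
    by rewrite addrC.
- move=> refl star cii X T g Hg.
  have [U [q Hq]] := star T.
  have [U' [p' [h [Hp' Hh]]]] := cii U X (compose g q).
  exists U', h, (compose q (fmap eta p')); split; last by rewrite comp_assoc.
  apply: refl; rewrite -Hh.
  apply: (He1 _ _ _ _ _ (fmap_epi eta Hp')).
  exact: (He1 _ _ _ _ _ Hq Hg).
Qed.
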